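(* Let $\mathcal{X}\subset\mathbb{R}$ be compact and let $p$ be a continuous probability density on $\mathcal{X}$. Assume there exists $\delta>0$ with $\inf_{x\in\mathcal{X}}p(x)>\delta$. Then for every $\epsilon>0$ there exist an integer $N\ge1$ and real constants $\mu_i\in\mathbb{R}$, $\sigma_i>0$ ($i=1,\dots,N$) such that, with $$f_N(x)=\frac{1}{N}\sum_{i=1}^N \frac{e^{-\frac{x-\mu_i}{\sigma_i}}}{\sigma_i\left(1+e^{-\frac{x-\mu_i}{\sigma_i}}\right)^2},$$ one has $\mathrm{KL}(p\,\|\,f_N)=\int_{\mathcal{X}}p(x)\log\frac{p(x)}{f_N(x)}\,dx<\epsilon$.
   Context: $\mathrm{KL}(p\|q)=\int p\log(p/q)$ denotes the Kullback–Leibler divergence. $f_N$ is the density on $\mathbb{R}$ of an equally weighted mixture of $N$ logistic distributions with locations $\mu_i$ and scales $\sigma_i$. *)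

(* Defs.v *)
From Stdlib Require Import Reals Lra.
Open Scope R_scope.

Definition logistic_pdf (mu s x : R) : R :=
  exp (- ((x - mu) / s)) / (s * (1 + exp (- ((x - mu) / s))) ^ 2).

(** Equally weighted mixture of N logistic densities (indices 0..N-1). *)
Definition fN (N : nat) (mu sigma : nat -> R) (x : R) : R :=
  / INR N * sum_f_R0 (fun i => logistic_pdf (mu i) (sigma i) x) (pred N).

(** [IntegralOn X g v]: v is the (Lebesgue) integral of g over the compact
    set X.  Expressed via Riemann integrals of g against continuous cut-offs
    phi with 0 <= phi <= 1, phi = 1 on X and phi = 0 at distance >= d from X:
    the integrals must converge to v as d -> 0.  For a compact X and g
    continuous on a neighbourhood of X this characterizes the Lebesgue
    integral of g over X (dominated convergence). *)
Definition IntegralOn (X : R -> Prop) (g : R -> R) (v : R) : Prop :=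
  exists a b : R,
    (forall x, X x -> a + 1 <= x <= b - 1) /\
    forall eps, 0 < eps ->
      exists d, 0 < d /\
        forall phi : R -> R,
          continuity phi ->
          (forall x, 0 <= phi x <= 1) ->
          (forall x, X x -> phi x = 1) ->
          (forall x, (forall y, X y -> d <= Rabs (x - y)) -> phi x = 0) ->
          exists pr : Riemann_integrable (fun x => phi x * g x) a b,
            Rabs (RiemannInt pr - v) < eps.

(* Main.v *)
Require Import Defs.
From Stdlib Require Import Reals.
From Stdlib Require Import Lra Lia ZArith Classical_Prop.
From Coquelicot Require Coquelicot.
Open Scope R_scope.
Module M1.
Import Coquelicot.Coquelicot.
Open Scope R_scope.

Definition kk (s t : R) : R := exp (- (t / s)) / (s * (1 + exp (- (t / s))) ^ 2).
Definition FF (s t : R) : R := / (1 + exp (- (t / s))).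

Lemma frac_le A B C D : 0 < B -> 0 < D -> A * D <= C * B -> A / B <= C / D.
Proof.
  intros HB HD H. apply (Rmult_le_reg_r (B * D)); [nra|].
  replace (A / B * (B * D)) with (A * D) by (field; lra).
  replace (C / D * (B * D)) with (C * B) by (field; lra). lra.
Qed.

Lemma kk_pos s t : 0 < s -> 0 < kk s t.
Proof.
  intros Hs. unfold kk. pose proof (exp_pos (- (t / s))).
  apply Rdiv_lt_0_compat; [lra|]. apply Rmult_lt_0_compat; [lra|]. apply pow_lt; lra.
Qed.

Lemma kk_le s t : 0 < s -> kk s t <= / (4 * s).
Proof.
  intros Hs. unfold kk. set (y := exp (- (t / s))). assert (0 < y) by apply exp_pos.
  replace (/ (4 * s)) with (1 / (4 * s)) by (field; lra).
  apply frac_le; [apply Rmult_lt_0_compat; [lra| apply pow_lt; lra] | lra |].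
  assert (0 <= s * ((1 - y) * (1 - y))) by (apply Rmult_le_pos; [lra| apply Rle_0_sqr]).
  simpl. nra.
Qed.

Lemma kk_y s t : 0 < s -> kk s t = (exp (- (t / s)) / (1 + exp (- (t / s))) ^ 2) / s.
Proof. intros. unfold kk. pose proof (exp_pos (- (t / s))). field. repeat split; lra. Qed.

Lemma phi_dec y1 y2 : 1 <= y2 <= y1 -> y1 / (1 + y1) ^ 2 <= y2 / (1 + y2) ^ 2.
Proof.
  intros H. apply frac_le; try (apply pow_lt; lra).
  assert (0 <= (y1 - y2) * (y1 * y2 - 1)) by (apply Rmult_le_pos; nra). simpl. nra.
Qed.

Lemma phi_inc y1 y2 : 0 < y1 <= y2 -> y2 <= 1 -> y1 / (1 + y1) ^ 2 <= y2 / (1 + y2) ^ 2.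
Proof.
  intros H H2. apply frac_le; try (apply pow_lt; lra).
  assert (0 <= (y2 - y1) * (1 - y1 * y2)) by (apply Rmult_le_pos; nra). simpl. nra.
Qed.

Lemma exp_le_mono a b : a <= b -> exp a <= exp b.
Proof. intros [H|H]; [left; apply exp_increasing; auto| subst; lra]. Qed.

Lemma kk_mono_neg s u v : 0 < s -> u <= v -> v <= 0 -> kk s u <= kk s v.
Proof.
  intros Hs H1 H2. rewrite !kk_y by lra. unfold Rdiv at 1 3.
  apply Rmult_le_compat_r; [left; apply Rinv_0_lt_compat; lra|].
  apply phi_dec. split.
  - rewrite <- exp_0. apply exp_le_mono. assert (v / s <= 0).
    { unfold Rdiv. assert (0 < / s) by (apply Rinv_0_lt_compat; lra). nra. } lra.
  - apply exp_le_mono. assert (u / s <= v / s).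
    { unfold Rdiv. assert (0 < / s) by (apply Rinv_0_lt_compat; lra). nra. } lra.
Qed.

Lemma kk_mono_pos s u v : 0 < s -> 0 <= u -> u <= v -> kk s v <= kk s u.
Proof.
  intros Hs H1 H2. rewrite !kk_y by lra. unfold Rdiv at 1 3.
  apply Rmult_le_compat_r; [left; apply Rinv_0_lt_compat; lra|].
  assert (0 < / s) by (apply Rinv_0_lt_compat; lra).
  apply phi_inc. split. apply exp_pos.
  - apply exp_le_mono. unfold Rdiv. nra.
  - rewrite <- exp_0. apply exp_le_mono. unfold Rdiv. nra.
Qed.

Lemma kk_max s t : 0 < s -> kk s t <= kk s 0.
Proof.
  intros Hs. destruct (Rle_dec t 0).
  - apply kk_mono_neg; lra.
  - apply kk_mono_pos; lra.
Qed.

Lemma FF_mono s u v : 0 < s -> u <= v -> FF s u <= FF s v.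
Proof.
  intros Hs H. unfold FF. apply Rinv_le_contravar.
  - pose proof (exp_pos (- (v / s))). lra.
  - apply Rplus_le_compat_l. apply exp_le_mono.
    assert (0 < / s) by (apply Rinv_0_lt_compat; lra). unfold Rdiv. nra.
Qed.

Lemma FF_deriv s t : 0 < s -> is_derive (FF s) t (kk s t).
Proof.
  intros Hs. unfold FF, kk. auto_derive.
  - pose proof (exp_pos (- (t / s))). lra.
  - unfold Rdiv. set (e := exp (- (t * / s))).
    assert (0 < e) by apply exp_pos. simpl. field. split; lra.
Qed.

Lemma FF_cont s t : 0 < s -> continuity_pt (FF s) t.
Proof.
  intros Hs. apply derivable_continuous_pt. exists (kk s t).
  apply is_derive_Reals. apply FF_deriv; auto.
Qed.

Lemma FF_mvt s t h : 0 < s -> 0 < h ->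
  exists xi, t <= xi <= t + h /\ FF s (t + h) - FF s t = kk s xi * h.
Proof.
  intros Hs Hh. destruct (MVT_gen (FF s) t (t + h) (kk s)) as [c [Hc Heq]].
  - intros. apply FF_deriv; auto.
  - intros. apply FF_cont; auto.
  - exists c. rewrite Rmin_left in Hc by lra. rewrite Rmax_right in Hc by lra.
    split; [auto|]. rewrite Heq. f_equal; ring.
Qed.

End M1.
Import M1.

Definition clamp (lo hi t : R) : R := Rmax lo (Rmin hi t).

Lemma clamp_in lo hi t : lo <= t <= hi -> clamp lo hi t = t.
Proof. intros. unfold clamp, Rmax, Rmin. repeat destruct Rle_dec; lra. Qed.
Lemma clamp_lo lo hi t : t <= lo -> lo <= hi -> clamp lo hi t = lo.
Proof. intros. unfold clamp, Rmax, Rmin. repeat destruct Rle_dec; lra. Qed.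
Lemma clamp_hi lo hi t : hi <= t -> lo <= hi -> clamp lo hi t = hi.
Proof. intros. unfold clamp, Rmax, Rmin. repeat destruct Rle_dec; lra. Qed.
Lemma clamp_range lo hi t : lo <= hi -> lo <= clamp lo hi t <= hi.
Proof. intros. unfold clamp, Rmax, Rmin. repeat destruct Rle_dec; lra. Qed.
Lemma clamp_le lo hi t : lo <= t -> clamp lo hi t <= t.
Proof. intros. unfold clamp, Rmax, Rmin. repeat destruct Rle_dec; lra. Qed.
Lemma clamp_ge lo hi t : t <= hi -> t <= clamp lo hi t.
Proof. intros. unfold clamp, Rmax, Rmin. repeat destruct Rle_dec; lra. Qed.
Lemma clamp_cases lo hi t : lo <= t -> lo <= hi -> clamp lo hi t = t \/ clamp lo hi t = hi.
Proof. intros. unfold clamp, Rmax, Rmin. repeat destruct Rle_dec; lra. Qed.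

Definition Gf s d t := FF s (clamp (- d) d t).
Definition Hf s d h t := kk s (clamp (- d - h) 0 t).
Definition nearterm s d h t :=
  match Rle_dec (- d - h) t, Rle_dec t d with
  | left _, left _ => h * kk s t
  | _, _ => 0 end.

Lemma nearterm_ge0 s d h t : 0 < s -> 0 < h -> 0 <= nearterm s d h t.
Proof. intros. unfold nearterm. pose proof (kk_pos s t H).
  repeat destruct Rle_dec; nra. Qed.

Lemma per_term s d h t : 0 < s -> 0 < h -> 0 < d ->
  (Gf s d (t + h) - Gf s d t) - h * (Hf s d h (t + h) - Hf s d h t) <= nearterm s d h t.
Proof.
  intros Hs Hh Hd. unfold Gf, Hf, nearterm.
  destruct (Rle_dec (- d - h) t) as [H1|H1]; [destruct (Rle_dec t d) as [H2|H2]|].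
  - destruct (FF_mvt s t h Hs Hh) as [xi [Hxi Hm]].
    assert (A1 : FF s (clamp (- d) d (t + h)) <= FF s (t + h))
      by (apply FF_mono; auto; apply clamp_le; lra).
    assert (A2 : FF s t <= FF s (clamp (- d) d t))
      by (apply FF_mono; auto; apply clamp_ge; lra).
    destruct (Rle_dec 0 t) as [H3|H3].
    + rewrite (clamp_hi (-d-h) 0 t) by lra. rewrite (clamp_hi (-d-h) 0 (t+h)) by lra.
      assert (kk s xi <= kk s t) by (apply kk_mono_pos; lra).
      assert (kk s xi * h <= kk s t * h) by (apply Rmult_le_compat_r; lra). lra.
    + rewrite (clamp_in (-d-h) 0 t) by lra.
      assert (kk s xi <= kk s (clamp (- d - h) 0 (t + h))).
      { pose proof (clamp_range (-d-h) 0 (t+h)).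
        destruct (Rle_dec xi 0).
        - apply kk_mono_neg; try lra.
          destruct (clamp_cases (-d-h) 0 (t+h)) as [E|E]; lra.
        - rewrite (clamp_hi (-d-h) 0 (t+h)) by lra. apply kk_max; auto. }
      assert (kk s xi * h <= kk s (clamp (- d - h) 0 (t + h)) * h) by (apply Rmult_le_compat_r; lra).
      lra.
  - rewrite (clamp_hi (-d) d t) by lra. rewrite (clamp_hi (-d) d (t+h)) by lra.
    rewrite (clamp_hi (-d-h) 0 t) by lra. rewrite (clamp_hi (-d-h) 0 (t+h)) by lra. lra.
  - rewrite (clamp_lo (-d) d t) by lra. rewrite (clamp_lo (-d) d (t+h)) by lra.
    rewrite (clamp_lo (-d-h) 0 t) by lra.
    assert (kk s (- d - h) <= kk s (clamp (- d - h) 0 (t + h))).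
    { pose proof (clamp_range (-d-h) 0 (t+h)). apply kk_mono_neg; lra. }
    assert (h * kk s (- d - h) <= h * kk s (clamp (- d - h) 0 (t + h))) by (apply Rmult_le_compat_l; lra).
    lra.
Qed.

Fixpoint sumn (f : nat -> R) (n : nat) : R :=
  match n with O => 0 | S n' => sumn f n' + f n' end.

Lemma sumn_tele (P : nat -> R) n : sumn (fun j => P j - P (S j)) n = P O - P n.
Proof. induction n; simpl; [ring| rewrite IHn; ring]. Qed.

Lemma sumn_le f g n : (forall j, (j < n)%nat -> f j <= g j) -> sumn f n <= sumn g n.
Proof. induction n; intros H; simpl; [lra|]. pose proof (H n (Nat.lt_succ_diag_r n)).
  assert (sumn f n <= sumn g n) by (apply IHn; intros; apply H; lia). lra. Qed.

Lemma sumn_ge0 f n : (forall j, (j < n)%nat -> 0 <= f j) -> 0 <= sumn f n.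
Proof. intros H. replace 0 with (sumn (fun _ => 0) n). apply sumn_le; auto.
  induction n; simpl; auto. rewrite IHn; [ring|]. intros; apply H; lia. Qed.

Lemma sumn_scal c f n : sumn (fun j => c * f j) n = c * sumn f n.
Proof. induction n; simpl; [ring| rewrite IHn; ring]. Qed.

Lemma sumn_plus f g n : sumn (fun j => f j + g j) n = sumn f n + sumn g n.
Proof. induction n; simpl; [ring| rewrite IHn; ring]. Qed.

Lemma sumn_const c n : sumn (fun _ => c) n = INR n * c.
Proof. induction n; simpl sumn; [simpl; ring| rewrite IHn, S_INR; ring]. Qed.

Lemma kernel_sum s d h x A0 K : 0 < s -> 0 < h -> 0 < d ->
  d <= x - A0 -> x - A0 - INR K * h + h <= - d - h ->
  FF s d - FF s (- d) - h * kk s 0 <=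
  sumn (fun j => nearterm s d h (x - (A0 + INR j * h))) K.
Proof.
  intros Hs Hh Hd H1 H2.
  set (Phi := fun t => Gf s d t - h * Hf s d h t).
  set (P := fun j : nat => Phi (x - A0 + h - INR j * h)).
  apply Rle_trans with (sumn (fun j => P j - P (S j)) K).
  - rewrite sumn_tele. unfold P, Phi, Gf, Hf. simpl INR.
    rewrite (clamp_hi (-d) d (x - A0 + h - 0 * h)) by lra.
    rewrite (clamp_hi (-d-h) 0 (x - A0 + h - 0 * h)) by lra.
    rewrite (clamp_lo (-d) d (x - A0 + h - INR K * h)) by lra.
    rewrite (clamp_lo (-d-h) 0 (x - A0 + h - INR K * h)) by lra.
    pose proof (kk_pos s (- d - h) Hs). nra.
  - apply sumn_le. intros j _. unfold P, Phi.
    pose proof (per_term s d h (x - (A0 + INR j * h)) Hs Hh Hd).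
    replace (x - A0 + h - INR j * h) with (x - (A0 + INR j * h) + h) by ring.
    replace (x - A0 + h - INR (S j) * h) with (x - (A0 + INR j * h)) by (rewrite S_INR; ring).
    lra.
Qed.


Fixpoint nsum (f : nat -> nat) (K : nat) : nat :=
  match K with O => O | S K' => (nsum f K' + f K')%nat end.

Lemma sumn_front f K : sumn f (S K) = f O + sumn (fun i => f (S i)) K.
Proof. induction K; simpl in *; [ring|]. rewrite IHK. ring. Qed.

Lemma nsum_front f K : nsum f (S K) = (f O + nsum (fun i => f (S i)) K)%nat.
Proof. induction K; simpl in *; [lia|]. rewrite IHK. lia. Qed.

Lemma sumn_split g a b : sumn g (a + b) = sumn g a + sumn (fun i => g (a + i)%nat) b.
Proof. induction b; simpl. rewrite Nat.add_0_r; ring.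
  rewrite Nat.add_succ_r. simpl. rewrite IHb. ring. Qed.

Lemma sumn_ext f g n : (forall i, (i < n)%nat -> f i = g i) -> sumn f n = sumn g n.
Proof. induction n; intros H; simpl; auto. rewrite IHn by (intros; apply H; lia).
  rewrite H by lia. auto. Qed.

Lemma nsum_ext f g n : (forall i, (i < n)%nat -> f i = g i) -> nsum f n = nsum g n.
Proof. induction n; intros H; simpl; auto. rewrite IHn by (intros; apply H; lia).
  rewrite H by lia. auto. Qed.

Lemma sum_f_R0_sumn f N : (1 <= N)%nat -> sum_f_R0 f (pred N) = sumn f N.
Proof. intros H. destruct N; [lia|]. simpl pred. clear H. induction N.
  - simpl. ring.
  - simpl sum_f_R0. rewrite IHN. simpl. ring. Qed.

Fixpoint locs (n : nat -> nat) (c : nat -> R) (dump : R) (j K : nat) (i : nat) : R :=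
  match K with
  | O => dump
  | S K' => if Nat.ltb i (n j) then c j else locs n c dump (S j) K' (i - n j)
  end.

Lemma locs_sum (g : R -> R) n c dump : (forall y, 0 <= g y) ->
  forall K j T, (nsum (fun jj => n (j + jj)%nat) K <= T)%nat ->
  sumn (fun jj => INR (n (j + jj)%nat) * g (c (j + jj)%nat)) K <=
  sumn (fun i => g (locs n c dump j K i)) T.
Proof.
  intros Hg. induction K; intros j T HT.
  - simpl. apply sumn_ge0. intros; auto.
  - rewrite sumn_front. rewrite nsum_front in HT. rewrite Nat.add_0_r in *.
    replace T with (n j + (T - n j))%nat by lia.
    rewrite sumn_split.
    rewrite (sumn_ext (fun i => g (locs n c dump j (S K) i)) (fun _ => g (c j))).
    2:{ intros i Hi. simpl. destruct (Nat.ltb_spec i (n j)); [auto| lia]. }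
    rewrite sumn_const.
    rewrite (sumn_ext (fun i => g (locs n c dump j (S K) (n j + i))) (fun i => g (locs n c dump (S j) K i))).
    2:{ intros i Hi. simpl. destruct (Nat.ltb_spec (n j + i) (n j)); [lia|].
        replace (n j + i - n j)%nat with i by lia. auto. }
    assert (IH := IHK (S j) (T - n j)%nat).
    rewrite (sumn_ext (fun i => INR (n (j + S i)%nat) * g (c (j + S i)%nat))
               (fun i => INR (n (S j + i)%nat) * g (c (S j + i)%nat))).
    2:{ intros. replace (j + S i)%nat with (S j + i)%nat by lia. auto. }
    assert (HT' : (nsum (fun jj => n (S j + jj)%nat) K <= T - n j)%nat).
    { rewrite (nsum_ext (fun jj => n (S j + jj)%nat) (fun i => n (j + S i)%nat)); [lia|].
      intros; f_equal; lia. }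
    specialize (IH HT'). lra.
Qed.

Module M4.
Import Coquelicot.Coquelicot.
Open Scope R_scope.

Lemma cont_coq (q : R -> R) x : continuity_pt q x -> continuous q x.
Proof. intros H. apply continuity_pt_filterlim. auto. Qed.

Lemma exRInt_cont (q : R -> R) u v : continuity q -> ex_RInt q u v.
Proof. intros H. apply (ex_RInt_continuous (V := R_CompleteNormedModule)). intros. apply cont_coq. apply H. Qed.

Lemma riemann_lower (q : R -> R) u h (w0 : nat -> R) K : 0 < h -> continuity q ->
  (forall j, (j < K)%nat -> forall y, u + INR j * h <= y <= u + INR j * h + h -> w0 j <= q y) ->
  sumn (fun j => h * w0 j) K <= RInt q u (u + INR K * h).
Proof.
  intros Hh Hq. induction K; intros H.
  - simpl. rewrite Rmult_0_l, Rplus_0_r, RInt_point. unfold zero; simpl; lra.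
  - simpl sumn. rewrite S_INR.
    rewrite <- (RInt_Chasles q u (u + INR K * h) (u + (INR K + 1) * h)) by (apply exRInt_cont; auto).
    assert (IH : sumn (fun j => h * w0 j) K <= RInt q u (u + INR K * h)).
    { apply IHK. intros j Hj. apply H. lia. }
    assert (h * w0 K <= RInt q (u + INR K * h) (u + (INR K + 1) * h)).
    { replace (h * w0 K) with (RInt (fun _ => w0 K) (u + INR K * h) (u + (INR K + 1) * h)).
      - apply RInt_le.
        + nra.
        + apply ex_RInt_const.
        + apply exRInt_cont; auto.
        + intros y Hy. apply (H K); [lia| lra].
      - rewrite RInt_const. unfold scal. simpl. unfold mult. simpl. ring. }
    unfold plus. simpl. lra.
Qed.


Lemma floor_prop r : 0 <= r -> INR (Z.to_nat (Int_part r)) <= r /\ r - 1 < INR (Z.to_nat (Int_part r)).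
Proof.
  intros Hr. destruct (base_Int_part r) as [H1 H2].
  assert (Hz : (0 <= Int_part r)%Z).
  { assert (IZR (-1) < IZR (Int_part r)) by (simpl; lra). apply lt_IZR in H. lia. }
  rewrite INR_IZR_INZ, Z2Nat.id by auto. lra.
Qed.

Lemma ceil_prop r : 0 < r -> r < INR (Z.to_nat (up r)) <= r + 1.
Proof.
  intros Hr. destruct (archimed r) as [H1 H2].
  assert (Hz : (0 <= up r)%Z).
  { assert (IZR 0 < IZR (up r)) by (simpl; lra). apply lt_IZR in H. lia. }
  rewrite INR_IZR_INZ, Z2Nat.id by auto. lra.
Qed.

Lemma INR_nsum f K : INR (nsum f K) = sumn (fun j => INR (f j)) K.
Proof. induction K; simpl nsum; simpl sumn; [auto|]. rewrite plus_INR, IHK. auto. Qed.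

Lemma fN_sumn N mu s x : (1 <= N)%nat ->
  fN N mu (fun _ => s) x = / INR N * sumn (fun i => kk s (x - mu i)) N.
Proof. intros H. unfold fN. rewrite sum_f_R0_sumn by auto. reflexivity. Qed.

Lemma fN_ge0 N mu s x : (1 <= N)%nat -> 0 < s -> 0 <= fN N mu (fun _ => s) x.
Proof. intros H Hs. rewrite fN_sumn by auto. apply Rmult_le_pos.
  - left. apply Rinv_0_lt_compat. apply lt_0_INR. lia.
  - apply sumn_ge0. intros. left. apply kk_pos; auto. Qed.

Lemma kk0 s : 0 < s -> kk s 0 = / (4 * s).
Proof. intros. unfold kk. replace (- (0 / s)) with 0 by (field; lra). rewrite exp_0. field. lra. Qed.

Lemma FF_gap s d tau : 0 < s -> 0 < d -> 0 < tau -> s = d * tau / 4 ->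
  1 - tau / 2 <= FF s d - FF s (- d).
Proof.
  intros Hs Hd Ht Es. unfold FF.
  set (e := exp (- (d / s))).
  assert (He : 0 < e) by apply exp_pos.
  replace (exp (- (- d / s))) with (/ e).
  2:{ unfold e. rewrite <- exp_Ropp. f_equal. field. lra. }
  assert (e <= tau / 4).
  { assert (d / s = 4 / tau) by (rewrite Es; field; lra).
    unfold e. rewrite H. pose proof (exp_ineq1 (4 / tau)).
    assert (0 < 4 / tau) by (apply Rdiv_lt_0_compat; lra).
    specialize (H0 ltac:(lra)). rewrite exp_Ropp.
    replace (tau / 4) with (/ (4 / tau)) by (field; lra).
    apply Rinv_le_contravar; lra. }
  replace (/ (1 + / e)) with (e / (1 + e)) by (field; lra).
  replace (/ (1 + e) - e / (1 + e)) with ((1 - e) / (1 + e)) by (field; lra).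
  apply Rle_trans with (1 - 2 * e); [lra|].
  replace (1 - 2 * e) with ((1 - 2 * e) / 1) by field.
  apply frac_le; try lra. nra.
Qed.


Lemma core (q : R -> R) (A B eta : R) :
  A < B -> 0 < eta -> continuity q -> (forall x, 0 <= q x) ->
  (forall x, x < A \/ B < x -> q x = 0) ->
  (forall u v, u <= A -> B <= v -> RInt q u v <= 1) ->
  exists N s mu, (1 <= N)%nat /\ 0 < s /\ forall x, q x - eta <= fN N mu (fun _ => s) x.
Proof.
  intros HAB Heta Hq Hq0 Hqout Hint.
  destruct (continuity_ab_maj q A B) as [Mx [HM _]]; [lra| intros; apply Hq|].
  set (Q := q Mx).
  assert (HQ : forall x, q x <= Q).
  { intros x. destruct (Rle_dec A x); [destruct (Rle_dec x B)|].
    - apply HM; lra.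
    - rewrite Hqout by lra. apply Hq0.
    - rewrite Hqout by lra. apply Hq0. }
  assert (HQ0 : 0 <= Q) by apply Hq0.
  set (om := eta / 4).
  destruct (Heine q (fun c => A - 2 <= c <= B + 2) (compact_P3 _ _) (fun x _ => Hq x)
              (mkposreal om ltac:(unfold om; lra))) as [[rho Hrho] Hu].
  simpl in Hu.
  set (tau := eta / (8 * (Q + 1))).
  assert (Htau : 0 < tau) by (unfold tau; apply Rdiv_lt_0_compat; lra).
  set (d := Rmin (rho / 4) (1 / 4)).
  assert (Hd : 0 < d) by (unfold d; apply Rmin_glb_lt; lra).
  assert (Hd1 : d <= rho / 4) by apply Rmin_l.
  assert (Hd2 : d <= 1 / 4) by apply Rmin_r.
  set (s := d * tau / 4).
  assert (Hs : 0 < s) by (unfold s; nra).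
  set (h := Rmin (d / 2) (tau * s)).
  assert (Hh : 0 < h) by (unfold h; apply Rmin_glb_lt; nra).
  assert (Hh1 : h <= d / 2) by apply Rmin_l.
  assert (Hh2 : h <= tau * s) by apply Rmin_r.
  set (r := (B - A + 2) / h).
  assert (Hr : 0 < r) by (unfold r; apply Rdiv_lt_0_compat; lra).
  set (K := Z.to_nat (up r)).
  destruct (ceil_prop r Hr) as [HK1 HK2]. fold K in HK1, HK2.
  assert (HKh1 : B - A + 2 < INR K * h).
  { unfold r in HK1. apply (Rmult_lt_compat_r h) in HK1; auto.
    replace ((B - A + 2) / h * h) with (B - A + 2) in HK1 by (field; lra). lra. }
  assert (HKh2 : INR K * h <= B - A + 2 + h).
  { unfold r in HK2. apply (Rmult_le_compat_r h) in HK2; [|lra].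
    replace (((B - A + 2) / h + 1) * h) with (B - A + 2 + h) in HK2 by (field; lra). lra. }
  set (c := fun j : nat => A - 1 + INR j * h).
  set (w := fun j : nat => h * Rmax 0 (q (c j) - om)).
  assert (Hw0 : forall j, 0 <= w j).
  { intros j. unfold w. apply Rmult_le_pos; [lra| apply Rmax_l]. }
  assert (Hsumw : sumn w K <= 1).
  { apply Rle_trans with (RInt q (A - 1) (A - 1 + INR K * h)).
    - apply (riemann_lower q (A - 1) h (fun j => Rmax 0 (q (c j) - om)) K Hh Hq).
      intros j Hj y Hy. apply Rmax_lub; [apply Hq0|].
      assert (Hjk : INR j + 1 <= INR K) by (rewrite <- S_INR; apply le_INR; lia).
      assert (Hc0 : 0 <= INR j) by apply pos_INR.
      assert (Rabs (q (c j) - q y) < om).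
      { apply Hu; unfold c; try split; try nra.
        rewrite Rabs_left1 by nra. nra. }
      apply Rabs_def2 in H. lra.
    - apply Hint; lra. }
  set (rN := INR K / (s * eta)).
  assert (HrN : 0 <= rN).
  { unfold rN. apply Rmult_le_pos; [apply pos_INR| left; apply Rinv_0_lt_compat; nra]. }
  set (N := S (Z.to_nat (up (rN + 1)))).
  assert (HN1 : (1 <= N)%nat) by (unfold N; lia).
  assert (HNpos : 0 < INR N) by (apply lt_0_INR; lia).
  assert (HNr : rN <= INR N).
  { destruct (ceil_prop (rN + 1) ltac:(lra)). unfold N. rewrite S_INR. lra. }
  set (n := fun j => Z.to_nat (Int_part (INR N * w j))).
  assert (Hn : forall j, INR (n j) <= INR N * w j /\ INR N * w j - 1 < INR (n j)).
  { intros j. apply floor_prop. apply Rmult_le_pos; [lra| apply Hw0]. }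
  assert (Hnsum : (nsum (fun jj => n (0 + jj)%nat) K <= N)%nat).
  { apply INR_le. rewrite INR_nsum.
    apply Rle_trans with (sumn (fun j => INR N * w j) K).
    - apply sumn_le. intros. apply Hn.
    - rewrite sumn_scal. nra. }
  set (mu := locs n c 0 0 K).
  exists N, s, mu. split; [auto| split; [auto|]].
  intros x.
  assert (Hf0 := fN_ge0 N mu s x HN1 Hs).
  destruct (Rle_dec A x) as [HxA|HxA]; [destruct (Rle_dec x B) as [HxB|HxB]|];
    [| rewrite Hqout by lra; lra | rewrite Hqout by lra; lra].
  destruct (Rle_dec (q x) (2 * om)) as [Hqx|Hqx]; [unfold om in Hqx; lra|].
  rewrite fN_sumn by auto.
  assert (S1 : sumn (fun j => INR (n j) * kk s (x - c j)) K <=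
               sumn (fun i => kk s (x - mu i)) N).
  { pose proof (locs_sum (fun y => kk s (x - y)) n c 0 (fun y => Rlt_le _ _ (kk_pos s (x - y) Hs))
                  K 0 N Hnsum) as L.
    simpl in L. exact L. }
  assert (S2 : sumn (fun j => w j * kk s (x - c j)) K - INR K * (/ INR N * / (4 * s)) <=
               / INR N * sumn (fun j => INR (n j) * kk s (x - c j)) K).
  { rewrite <- sumn_scal. rewrite <- sumn_const.
    assert (forall a b, a - b = a + (-1) * b) as E by (intros; ring). rewrite E.
    rewrite <- sumn_scal, <- sumn_plus. apply sumn_le. intros j _.
    destruct (Hn j) as [_ Hn2]. pose proof (kk_pos s (x - c j) Hs).
    pose proof (kk_le s (x - c j) Hs).
    assert (w j - / INR N <= / INR N * INR (n j)).
    { apply (Rmult_le_reg_l (INR N)); auto. field_simplify; lra. }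
    assert (/ INR N * kk s (x - c j) <= / INR N * / (4 * s))
      by (apply Rmult_le_compat_l; [left; apply Rinv_0_lt_compat|]; lra).
    nra. }
  assert (S3 : (q x - 2 * om) * sumn (fun j => nearterm s d h (x - (A - 1 + INR j * h))) K <=
               sumn (fun j => w j * kk s (x - c j)) K).
  { rewrite <- sumn_scal. apply sumn_le. intros j Hj. unfold nearterm.
    pose proof (kk_pos s (x - c j) Hs). unfold c in *.
    destruct (Rle_dec (- d - h) (x - (A - 1 + INR j * h))) as [N1|N1];
      [destruct (Rle_dec (x - (A - 1 + INR j * h)) d) as [N2|N2]|].
    - assert (Rabs (q x - q (A - 1 + INR j * h)) < om).
      { apply Hu; try split; try lra. apply Rabs_def1; lra. }
      apply Rabs_def2 in H0.
      assert (q x - 2 * om <= Rmax 0 (q (A - 1 + INR j * h) - om)).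
      { eapply Rle_trans; [|apply Rmax_r]. lra. }
      unfold w, c.
      assert (0 <= h * kk s (x - (A - 1 + INR j * h))) by nra.
      replace (h * Rmax 0 (q (A - 1 + INR j * h) - om) * kk s (x - (A - 1 + INR j * h)))
        with (Rmax 0 (q (A - 1 + INR j * h) - om) * (h * kk s (x - (A - 1 + INR j * h)))) by ring.
      apply Rmult_le_compat_r; auto.
    - rewrite Rmult_0_r. apply Rmult_le_pos; [apply Hw0| lra].
    - rewrite Rmult_0_r. apply Rmult_le_pos; [apply Hw0| lra]. }
  assert (S4 := kernel_sum s d h x (A - 1) K Hs Hh Hd ltac:(lra) ltac:(lra)).
  assert (S5 := FF_gap s d tau Hs Hd Htau eq_refl).
  rewrite kk0 in S4 by auto.
  assert (h * / (4 * s) <= tau / 4).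
  { apply Rle_trans with (tau * s * / (4 * s)).
    - apply Rmult_le_compat_r; [left; apply Rinv_0_lt_compat; lra| auto].
    - right. field. lra. }
  assert (INR K * (/ INR N * / (4 * s)) <= eta / 4).
  { unfold rN in HNr.
    replace (INR K * (/ INR N * / (4 * s))) with ((INR K / (s * eta)) * (eta / 4) / INR N)
      by (field; repeat split; lra).
    apply (Rmult_le_reg_r (INR N)); auto. unfold Rdiv at 1. rewrite Rmult_assoc, Rinv_l by lra.
    nra. }
  set (SS := sumn (fun j => nearterm s d h (x - (A - 1 + INR j * h))) K) in *.
  assert (HSS : 1 - tau <= SS) by lra.
  assert (tau * Q <= eta / 8).
  { unfold tau. apply (Rmult_le_reg_r (8 * (Q + 1))); [lra|].
    replace (eta / (8 * (Q + 1)) * Q * (8 * (Q + 1))) with (eta * Q) by (field; lra). nra. }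
  assert (HQx := HQ x).
  assert (T1 : / INR N * sumn (fun j => INR (n j) * kk s (x - c j)) K <=
               / INR N * sumn (fun i => kk s (x - mu i)) N)
    by (apply Rmult_le_compat_l; [left; apply Rinv_0_lt_compat|]; lra).
  assert (T2 : (q x - 2 * om) * (1 - tau) <= (q x - 2 * om) * SS)
    by (apply Rmult_le_compat_l; lra).
  assert (Hom : 0 < om) by (unfold om; lra).
  assert (T3 : tau * (q x - 2 * om) <= tau * Q) by (apply Rmult_le_compat_l; lra).
  assert (T4 : (q x - 2 * om) * (1 - tau) = q x - 2 * om - tau * (q x - 2 * om)) by ring.
  assert (Eom : om = eta / 4) by reflexivity.
  lra.
Qed.

End M4.
Import M4.

Lemma lip_cont (f : R -> R) L : 0 <= L -> (forall x z, Rabs (f x - f z) <= L * Rabs (x - z)) -> continuity f.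
Proof.
  intros HL H x. unfold continuity_pt, continue_in, limit1_in, limit_in. simpl. unfold Rdist.
  intros e He. exists (e / (L + 1)). split; [apply Rdiv_lt_0_compat; lra|].
  intros z [_ Hz]. eapply Rle_lt_trans; [apply H|].
  apply Rle_lt_trans with (L * (e / (L + 1))).
  - apply Rmult_le_compat_l; lra.
  - apply (Rmult_lt_reg_r (L + 1)); [lra|].
    replace (L * (e / (L + 1)) * (L + 1)) with (L * e) by (field; lra). nra.
Qed.

Lemma clamp_lip lo hi a b : lo <= hi -> Rabs (clamp lo hi a - clamp lo hi b) <= Rabs (a - b).
Proof.
  intros. unfold clamp, Rmax, Rmin, Rabs.
  repeat destruct Rle_dec; repeat destruct Rcase_abs; lra.
Qed.

Lemma dist_exists (X : R -> Prop) x0 : X x0 ->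
  exists D : R -> R,
    (forall x y, X y -> D x <= Rabs (x - y)) /\
    (forall x e, D x < e -> exists y, X y /\ Rabs (x - y) < e) /\
    (forall x, 0 <= D x).
Proof.
  intros H0.
  assert (Hc : forall x, {m | is_lub (fun v => exists y, X y /\ v = - Rabs (x - y)) m}).
  { intros x. apply completeness.
    - exists 0. intros v [y [_ ->]]. pose proof (Rabs_pos (x - y)). lra.
    - exists (- Rabs (x - x0)). exists x0. auto. }
  exists (fun x => - proj1_sig (Hc x)). split; [|split].
  - intros x y Hy. destruct (Hc x) as [m [Hm1 Hm2]]. simpl.
    assert (- Rabs (x - y) <= m) by (apply Hm1; exists y; auto). lra.
  - intros x e He. destruct (Hc x) as [m [Hm1 Hm2]]. simpl in He.
    destruct (Classical_Prop.classic (exists y, X y /\ Rabs (x - y) < e)) as [E|E]; auto.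
    exfalso. assert (m <= - e).
    { apply Hm2. intros v [y [Hy ->]]. destruct (Rle_dec e (Rabs (x - y))); [lra|].
      exfalso. apply E. exists y. split; auto. lra. }
    lra.
  - intros x. destruct (Hc x) as [m [Hm1 Hm2]]. simpl.
    assert (m <= 0). { apply Hm2. intros v [y [_ ->]]. pose proof (Rabs_pos (x - y)). lra. }
    lra.
Qed.

Lemma dist_lip (X : R -> Prop) (D : R -> R) :
  (forall x y, X y -> D x <= Rabs (x - y)) ->
  (forall x e, D x < e -> exists y, X y /\ Rabs (x - y) < e) ->
  forall x z, Rabs (D x - D z) <= Rabs (x - z).
Proof.
  intros H1 H2.
  assert (K : forall x z, D x <= Rabs (x - z) + D z).
  { intros x z. destruct (Rle_dec (D x) (Rabs (x - z) + D z)) as [|n]; auto. exfalso.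
    destruct (H2 z (D x - Rabs (x - z))) as [y [Hy Hzy]]; [lra|].
    pose proof (H1 x y Hy).
    assert (Rabs (x - y) <= Rabs (x - z) + Rabs (z - y)).
    { replace (x - y) with ((x - z) + (z - y)) by ring. apply Rabs_triang. }
    lra. }
  intros x z. pose proof (K x z). pose proof (K z x). rewrite Rabs_minus_sym in H0.
  unfold Rabs at 1. destruct Rcase_abs; lra.
Qed.

Definition Cut (X : R -> Prop) (d : R) (phi : R -> R) : Prop :=
  continuity phi /\ (forall x, 0 <= phi x <= 1) /\ (forall x, X x -> phi x = 1) /\
  (forall x, (forall y, X y -> d <= Rabs (x - y)) -> phi x = 0).

Lemma Cut_mono X d d' phi : d' <= d -> Cut X d' phi -> Cut X d phi.
Proof. intros H [H1 [H2 [H3 H4]]]. split; [auto|split; [auto|split; [auto|]]].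
  intros z Hz. apply H4. intros y Hy. specialize (Hz y Hy). lra. Qed.

Lemma Cut_zero X (D : R -> R) d phi : (forall x y, X y -> D x <= Rabs (x - y)) ->
  Cut X d phi -> forall x, d <= D x -> phi x = 0.
Proof. intros HD [_ [_ [_ E]]] z Hz. apply E. intros y Hy. specialize (HD z y Hy). lra. Qed.

Definition psi (D : R -> R) (d x : R) : R := clamp 0 1 (2 - 2 * D x / d).

Lemma psi_cut X (D : R -> R) d : 0 < d ->
  (forall x y, X y -> D x <= Rabs (x - y)) ->
  (forall x e, D x < e -> exists y, X y /\ Rabs (x - y) < e) ->
  (forall x, 0 <= D x) ->
  Cut X d (psi D d) /\ (forall x, D x <= d / 2 -> psi D d x = 1).
Proof.
  intros Hd H1 H2 H3. pose proof (dist_lip X D H1 H2) as HL.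
  split; [split; [|split; [|split]]|].
  - apply (lip_cont _ (2 / d)); [left; apply Rdiv_lt_0_compat; lra|].
    intros x z. unfold psi. eapply Rle_trans; [apply clamp_lip; lra|].
    replace (2 - 2 * D x / d - (2 - 2 * D z / d)) with ((2 / d) * (D z - D x)) by (field; lra).
    rewrite Rabs_mult, Rabs_right by (left; apply Rdiv_lt_0_compat; lra).
    rewrite Rabs_minus_sym. apply Rmult_le_compat_l; [left; apply Rdiv_lt_0_compat; lra|].
    apply HL.
  - intros x. unfold psi. apply clamp_range. lra.
  - intros x Hx. unfold psi. apply clamp_hi; [|lra].
    assert (D x <= 0) by (specialize (H1 x x Hx); rewrite Rminus_diag, Rabs_R0 in H1; auto).
    assert (D x = 0) by (specialize (H3 x); lra). rewrite H0. unfold Rdiv. lra.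
  - intros x Hx. unfold psi. apply clamp_lo; [|lra].
    assert (d <= D x).
    { destruct (Rle_dec d (D x)); auto. destruct (H2 x d) as [y [Hy Hxy]]; [lra|].
      specialize (Hx y Hy). lra. }
    assert (1 <= D x / d).
    { apply (Rmult_le_reg_r d); auto. unfold Rdiv. rewrite Rmult_assoc, Rinv_l; lra. }
    unfold Rdiv in *. lra.
  - intros x Hx. unfold psi. apply clamp_hi; [|lra].
    assert (D x / d <= 1 / 2).
    { apply (Rmult_le_reg_r d); auto. unfold Rdiv. rewrite Rmult_assoc, Rinv_l; lra. }
    unfold Rdiv in *. lra.
Qed.


Lemma RI_scal f a b k (pr1 : Riemann_integrable f a b)
  (pr2 : Riemann_integrable (fun x => k * f x) a b) : a <= b ->
  RiemannInt pr2 = k * RiemannInt pr1.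
Proof.
  intros Hab.
  set (pr3 := RiemannInt_P10 k (RiemannInt_P14 a b 0) pr1).
  rewrite (RiemannInt_P18 pr2 pr3 Hab).
  - rewrite (RiemannInt_P13 (RiemannInt_P14 a b 0) pr1 pr3).
    rewrite RiemannInt_P15. ring.
  - intros. unfold fct_cte. ring.
Qed.

Lemma cont_dom (g f1 f2 : R -> R) x :
  continuity_pt f1 x -> continuity_pt f2 x ->
  (forall y, Rabs (g y - g x) <= Rabs (f1 y - f1 x) + Rabs (f2 y - f2 x)) ->
  continuity_pt g x.
Proof.
  unfold continuity_pt, continue_in, limit1_in, limit_in; simpl; unfold Rdist.
  intros H1 H2 H e He.
  destruct (H1 (e / 2)) as [d1 [Hd1 K1]]; [lra|].
  destruct (H2 (e / 2)) as [d2 [Hd2 K2]]; [lra|].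
  exists (Rmin d1 d2). split; [apply Rmin_glb_lt; auto|].
  intros y [Hy1 Hy2].
  assert (Rabs (y - x) < d1) by (apply Rlt_le_trans with (Rmin d1 d2); [auto| apply Rmin_l]).
  assert (Rabs (y - x) < d2) by (apply Rlt_le_trans with (Rmin d1 d2); [auto| apply Rmin_r]).
  specialize (K1 y (conj Hy1 H0)). specialize (K2 y (conj Hy1 H3)).
  specialize (H y). lra.
Qed.

Lemma cont_max (f1 f2 : R -> R) : continuity f1 -> continuity f2 ->
  continuity (fun x => Rmax (f1 x) (f2 x)).
Proof.
  intros H1 H2 x. apply (cont_dom _ f1 f2); auto. intros y.
  unfold Rmax, Rabs. repeat destruct Rle_dec; repeat destruct Rcase_abs; lra.
Qed.

Lemma cont_min (f1 f2 : R -> R) : continuity f1 -> continuity f2 ->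
  continuity (fun x => Rmin (f1 x) (f2 x)).
Proof.
  intros H1 H2 x. apply (cont_dom _ f1 f2); auto. intros y.
  unfold Rmin, Rabs. repeat destruct Rle_dec; repeat destruct Rcase_abs; lra.
Qed.

Lemma Cut_max X d f1 f2 : Cut X d f1 -> Cut X d f2 -> Cut X d (fun x => Rmax (f1 x) (f2 x)).
Proof.
  intros [A1 [B1 [C1 E1]]] [A2 [B2 [C2 E2]]].
  split; [apply cont_max; auto| split; [| split]].
  - intros x. specialize (B1 x). specialize (B2 x). unfold Rmax; destruct Rle_dec; lra.
  - intros x Hx. rewrite C1, C2 by auto. unfold Rmax; destruct Rle_dec; lra.
  - intros x Hx. rewrite E1, E2 by auto. unfold Rmax; destruct Rle_dec; lra.
Qed.

Lemma Cut_min X d f1 f2 : Cut X d f1 -> Cut X d f2 -> Cut X d (fun x => Rmin (f1 x) (f2 x)).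
Proof.
  intros [A1 [B1 [C1 E1]]] [A2 [B2 [C2 E2]]].
  split; [apply cont_min; auto| split; [| split]].
  - intros x. specialize (B1 x). specialize (B2 x). unfold Rmin; destruct Rle_dec; lra.
  - intros x Hx. rewrite C1, C2 by auto. unfold Rmin; destruct Rle_dec; lra.
  - intros x Hx. rewrite E1, E2 by auto. unfold Rmin; destruct Rle_dec; lra.
Qed.

Lemma limit_exists (X : R -> Prop) (D p h : R -> R) (a0 b0 r M c : R) :
  a0 < b0 -> 0 < r -> 0 <= M -> 0 <= c ->
  (forall x y, X y -> D x <= Rabs (x - y)) ->
  (forall x e, D x < e -> exists y, X y /\ Rabs (x - y) < e) ->
  (forall x, 0 <= D x) ->
  (forall x, X x -> a0 + 1 <= x <= b0 - 1) ->
  (forall e, 0 < e -> exists d, 0 < d /\ forall phi, Cut X d phi ->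
       exists pr : Riemann_integrable (fun x => phi x * p x) a0 b0, Rabs (RiemannInt pr - 1) < e) ->
  (forall x, D x < r -> 0 < p x /\ continuity_pt h x /\ Rabs (h x) <= M * p x /\ h x <= c * p x) ->
  exists v, IntegralOn X h v /\ v <= c.
Proof.
  intros Hab Hr HM Hc HD1 HD2 HD3 HX Hp Hh.
  pose proof (dist_lip X D HD1 HD2) as HL.
  assert (Hpsi : forall d, 0 < d -> Cut X d (psi D d))
    by (intros d Hd; apply (psi_cut X D d Hd HD1 HD2 HD3)).
  assert (Hint : forall d phi, 0 < d -> d <= r / 2 -> Cut X d phi ->
            Riemann_integrable (fun x => phi x * h x) a0 b0).
  { intros d phi Hd Hdr Hphi. apply continuity_implies_RiemannInt; [lra|].
    intros x _. destruct (Rlt_dec (D x) r) as [Hx|Hx].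
    - apply continuity_pt_mult; [apply Hphi| apply Hh; auto].
    - apply (continuity_pt_locally_ext (fun _ => 0) _ d); auto.
      + intros y Hy. unfold Rdist in Hy. rewrite (Cut_zero X D d phi HD1 Hphi y); [ring|].
        pose proof (HL x y). rewrite Rabs_minus_sym in Hy.
        assert (D x - D y <= Rabs (D x - D y)) by apply Rle_abs. lra.
      + apply continuity_pt_const. intros u v. auto. }
  assert (Hcauchy : forall e, 0 < e -> exists d, 0 < d /\ d <= r / 2 /\
            forall phi1 phi2, Cut X d phi1 -> Cut X d phi2 ->
            forall (pr1 : Riemann_integrable (fun x => phi1 x * h x) a0 b0)
                   (pr2 : Riemann_integrable (fun x => phi2 x * h x) a0 b0),
            Rabs (RiemannInt pr1 - RiemannInt pr2) < e).
  { intros e He. set (e0 := e / (2 * (M + 1))).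
    assert (He0 : 0 < e0) by (unfold e0; apply Rdiv_lt_0_compat; lra).
    destruct (Hp e0 He0) as [d0 [Hd0 Hp0]].
    exists (Rmin d0 (r / 2)). split; [apply Rmin_glb_lt; lra| split; [apply Rmin_r|]].
    set (d := Rmin d0 (r / 2)). assert (Hdd : d <= d0) by apply Rmin_l.
    assert (Hdr : d <= r / 2) by apply Rmin_r.
    intros phi1 phi2 C1 C2 pr1 pr2.
    set (fM := fun x => Rmax (phi1 x) (phi2 x)).
    set (fm := fun x => Rmin (phi1 x) (phi2 x)).
    assert (CM : Cut X d fM) by (apply Cut_max; auto).
    assert (Cm : Cut X d fm) by (apply Cut_min; auto).
    destruct (Hp0 fM (Cut_mono X d0 d fM Hdd CM)) as [prM HprM].
    destruct (Hp0 fm (Cut_mono X d0 d fm Hdd Cm)) as [prm Hprm].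
    set (prG1 := RiemannInt_P10 (-1) pr1 pr2).
    set (prG2 := RiemannInt_P10 (-1) prM prm).
    assert (E1 : RiemannInt prG1 = RiemannInt pr1 - RiemannInt pr2)
      by (rewrite (RiemannInt_P13 pr1 pr2 prG1); ring).
    assert (E2 : RiemannInt prG2 = RiemannInt prM - RiemannInt prm)
      by (rewrite (RiemannInt_P13 prM prm prG2); ring).
    set (prA := RiemannInt_P16 prG1).
    set (prS := Riemann_integrable_scal M prG2).
    assert (I1 : Rabs (RiemannInt prG1) <= RiemannInt prA) by (apply RiemannInt_P17; lra).
    assert (I2 : RiemannInt prA <= RiemannInt prS).
    { apply RiemannInt_P19; [lra|]. intros x _.
      destruct (Rlt_dec (D x) d) as [Hx|Hx].
      - destruct (Hh x ltac:(lra)) as [Hp1 [_ [Hh1 _]]].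
        assert (Rabs (phi1 x - phi2 x) = fM x - fm x).
        { unfold fM, fm, Rmax, Rmin, Rabs. repeat destruct Rle_dec; repeat destruct Rcase_abs; lra. }
        replace (phi1 x * h x + -1 * (phi2 x * h x)) with ((phi1 x - phi2 x) * h x) by ring.
        replace (M * (fM x * p x + -1 * (fm x * p x))) with ((fM x - fm x) * (M * p x)) by ring.
        rewrite Rabs_mult, H. apply Rmult_le_compat_l; auto.
        rewrite <- H. apply Rabs_pos.
      - rewrite (Cut_zero X D d phi1 HD1 C1 x), (Cut_zero X D d phi2 HD1 C2 x),
          (Cut_zero X D d fM HD1 CM x), (Cut_zero X D d fm HD1 Cm x) by lra.
        rewrite Rabs_right; lra. }
    assert (E3 : RiemannInt prS = M * RiemannInt prG2) by (apply RI_scal; lra).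
    rewrite <- E1.
    apply Rabs_def2 in HprM. apply Rabs_def2 in Hprm.
    assert (RiemannInt prG2 < 2 * e0) by lra.
    assert (M * RiemannInt prG2 <= M * (2 * e0)) by (apply Rmult_le_compat_l; lra).
    assert (M * (2 * e0) < e).
    { unfold e0. replace (M * (2 * (e / (2 * (M + 1))))) with (e * (M / (M + 1))) by (field; lra).
      assert (M / (M + 1) < 1).
      { apply (Rmult_lt_reg_r (M + 1)); [lra|]. unfold Rdiv. rewrite Rmult_assoc, Rinv_l; lra. }
      nra. }
    lra. }
  set (L := fun v => exists d, 0 < d /\ d <= r / 2 /\ forall phi, Cut X d phi ->
             forall pr : Riemann_integrable (fun x => phi x * h x) a0 b0, v <= RiemannInt pr).
  destruct (Hcauchy 1 ltac:(lra)) as [d1 [Hd1 [Hd1r Hc1]]].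
  set (w1 := RiemannInt (Hint d1 (psi D d1) Hd1 Hd1r (Hpsi d1 Hd1))).
  assert (Lne : exists v, L v).
  { exists (w1 - 1). exists d1. split; [auto| split; [auto|]]. intros phi Cphi pr.
    specialize (Hc1 _ _ Cphi (Hpsi d1 Hd1) pr (Hint d1 (psi D d1) Hd1 Hd1r (Hpsi d1 Hd1))).
    apply Rabs_def2 in Hc1. unfold w1. lra. }
  assert (Lbd : forall e d, 0 < e -> 0 < d -> d <= r / 2 ->
            (forall phi1 phi2, Cut X d phi1 -> Cut X d phi2 ->
              forall (pr1 : Riemann_integrable (fun x => phi1 x * h x) a0 b0)
                     (pr2 : Riemann_integrable (fun x => phi2 x * h x) a0 b0),
              Rabs (RiemannInt pr1 - RiemannInt pr2) < e) ->
            forall phi, Cut X d phi -> forall pr : Riemann_integrable (fun x => phi x * h x) a0 b0,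
            forall v, L v -> v <= RiemannInt pr + e).
  { intros e d He Hd Hdr Hce phi Cphi pr v [dv [Hdv [Hdvr Hv]]].
    set (d' := Rmin dv d). assert (Hd' : 0 < d') by (apply Rmin_glb_lt; auto).
    assert (Hd'r : d' <= r / 2) by (eapply Rle_trans; [apply Rmin_r| auto]).
    set (pr' := Hint d' (psi D d') Hd' Hd'r (Hpsi d' Hd')).
    assert (v <= RiemannInt pr') by (apply Hv; apply (Cut_mono X dv d'); [apply Rmin_l| apply Hpsi; auto]).
    specialize (Hce _ _ (Cut_mono X d d' _ (Rmin_r _ _) (Hpsi d' Hd')) Cphi pr' pr).
    apply Rabs_def2 in Hce. lra. }
  assert (Lb : bound L).
  { exists (w1 + 1). intros v Hv.
    apply (Lbd 1 d1 ltac:(lra) Hd1 Hd1r Hc1 (psi D d1) (Hpsi d1 Hd1)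
             (Hint d1 (psi D d1) Hd1 Hd1r (Hpsi d1 Hd1)) v Hv). }
  destruct (completeness L Lb Lne) as [kl [Hkl1 Hkl2]].
  assert (Hup : forall e, 0 < e -> exists d, 0 < d /\ d <= r / 2 /\
            forall phi, Cut X d phi -> forall pr : Riemann_integrable (fun x => phi x * h x) a0 b0,
            kl <= RiemannInt pr + e /\ RiemannInt pr - e <= kl).
  { intros e He. destruct (Hcauchy e He) as [d [Hd [Hdr Hce]]].
    exists d. split; [auto| split; [auto|]]. intros phi Cphi pr. split.
    - apply Hkl2. intros v Hv. apply (Lbd e d He Hd Hdr Hce phi Cphi pr v Hv).
    - apply Hkl1. exists d. split; [auto| split; [auto|]]. intros phi' C' pr'.
      specialize (Hce _ _ C' Cphi pr' pr). apply Rabs_def2 in Hce. lra. }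
  exists kl. split.
  - exists a0, b0. split; auto.
    intros e He. destruct (Hup (e / 2) ltac:(lra)) as [d [Hd [Hdr Hu]]].
    exists d. split; auto. intros phi H1 H2 H3 H4.
    assert (Cphi : Cut X d phi) by (split; [auto| split; [auto| split; auto]]).
    exists (Hint d phi Hd Hdr Cphi).
    destruct (Hu phi Cphi (Hint d phi Hd Hdr Cphi)). apply Rabs_def1; lra.
  - destruct (Rle_dec kl c) as [|Hn]; auto. exfalso.
    set (e := (kl - c) / (2 * (c + 2))).
    assert (He : 0 < e) by (unfold e; apply Rdiv_lt_0_compat; lra).
    destruct (Hup e He) as [d3 [Hd3 [Hd3r Hu]]].
    destruct (Hp e He) as [d4 [Hd4 Hp4]].
    set (d := Rmin d3 d4). assert (Hd : 0 < d) by (apply Rmin_glb_lt; auto).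
    assert (Cd3 : Cut X d3 (psi D d)) by (apply (Cut_mono X d3 d); [apply Rmin_l| apply Hpsi; auto]).
    assert (Cd4 : Cut X d4 (psi D d)) by (apply (Cut_mono X d4 d); [apply Rmin_r| apply Hpsi; auto]).
    assert (Hdr : d3 <= r / 2) by auto.
    set (prh := Hint d3 (psi D d) Hd3 Hdr Cd3).
    destruct (Hp4 _ Cd4) as [prp Hprp].
    destruct (Hu _ Cd3 prh) as [U1 _].
    set (prS := Riemann_integrable_scal c prp).
    assert (I : RiemannInt prh <= RiemannInt prS).
    { apply RiemannInt_P19; [lra|]. intros x _.
      destruct (Rlt_dec (D x) d) as [Hx|Hx].
      - assert (D x < r) by (pose proof (Rmin_l d3 d4); fold d in H; lra).
        destruct (Hh x H) as [_ [_ [_ Hh4]]].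
        destruct (proj1 (proj2 (Hpsi d Hd)) x).
        replace (c * (psi D d x * p x)) with (psi D d x * (c * p x)) by ring.
        apply Rmult_le_compat_l; auto.
      - rewrite (Cut_zero X D d (psi D d) HD1 (Hpsi d Hd) x) by lra. lra. }
    assert (E3 : RiemannInt prS = c * RiemannInt prp) by (apply RI_scal; lra).
    apply Rabs_def2 in Hprp.
    assert (c * RiemannInt prp <= c * (1 + e)) by (apply Rmult_le_compat_l; lra).
    assert (kl <= c + e * (c + 1)) by lra.
    unfold e in H0. 
    assert ((kl - c) / (2 * (c + 2)) * (c + 1) < kl - c).
    { apply (Rmult_lt_reg_r (2 * (c + 2))); [lra|].
      replace ((kl - c) / (2 * (c + 2)) * (c + 1) * (2 * (c + 2))) with ((kl - c) * (c + 1)) by (field; lra).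
      nra. }
    lra.
Qed.

Module M9.
Import Coquelicot.Coquelicot.
Open Scope R_scope.

Lemma kk_cont s m x : 0 < s -> continuity_pt (fun y => kk s (y - m)) x.
Proof. intros Hs. apply continuity_pt_filterlim.
  apply (ex_derive_continuous (K := R_AbsRing) (V := R_NormedModule) (fun y => kk s (y - m))).
  unfold kk. auto_derive. set (e := exp _). assert (0 < e) by apply exp_pos.
  apply Rgt_not_eq. apply Rmult_lt_0_compat; [lra| nra].
Qed.

Lemma sumn_cont (F : nat -> R -> R) n x : (forall i, continuity_pt (F i) x) ->
  continuity_pt (fun y => sumn (fun i => F i y) n) x.
Proof. intros H. induction n; simpl.
  - apply continuity_pt_const. intros u v; auto.
  - apply continuity_pt_plus; auto. Qed.

Lemma fN_cont N mu s x : (1 <= N)%nat -> 0 < s -> continuity_pt (fun y => fN N mu (fun _ => s) y) x.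
Proof.
  intros HN Hs. apply (continuity_pt_locally_ext (fun y => / INR N * sumn (fun i => kk s (y - mu i)) N) _ 1).
  - lra.
  - intros y _. rewrite fN_sumn; auto.
  - apply continuity_pt_mult. apply continuity_pt_const; intros u v; auto.
    apply sumn_cont. intros i. apply kk_cont; auto.
Qed.

Lemma fN_pos N mu s x : (1 <= N)%nat -> 0 < s -> 0 < fN N mu (fun _ => s) x.
Proof. intros H Hs. rewrite fN_sumn by auto. apply Rmult_lt_0_compat.
  - apply Rinv_0_lt_compat. apply lt_0_INR. lia.
  - destruct N; [lia|]. simpl. pose proof (kk_pos s (x - mu N) Hs).
    assert (0 <= sumn (fun i => kk s (x - mu i)) N) by (apply sumn_ge0; intros; left; apply kk_pos; auto).
    lra. Qed.

Lemma fN_le N mu s x : (1 <= N)%nat -> 0 < s -> fN N mu (fun _ => s) x <= / (4 * s).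
Proof. intros H Hs. rewrite fN_sumn by auto.
  assert (HN : 0 < INR N) by (apply lt_0_INR; lia).
  apply Rle_trans with (/ INR N * sumn (fun _ => / (4 * s)) N).
  - apply Rmult_le_compat_l; [left; apply Rinv_0_lt_compat; auto|].
    apply sumn_le. intros. apply kk_le; auto.
  - rewrite sumn_const. right. field. lra. Qed.


Lemma RInt_zero_out (q : R -> R) u v : (forall x, u < x < v -> q x = 0) -> u <= v -> RInt q u v = 0.
Proof. intros H Huv. rewrite (RInt_ext q (fun _ => 0)).
  - rewrite RInt_const. unfold scal; simpl; unfold mult; simpl. ring.
  - intros x Hx. rewrite Rmin_left in Hx by lra. rewrite Rmax_right in Hx by lra. apply H; lra.
Qed.

Theorem main_aux (X : R -> Prop) (p : R -> R) :
  compact X ->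
  continuity p ->
  (forall x, X x -> 0 <= p x) ->
  IntegralOn X p 1 ->
  (exists delta, 0 < delta /\
     exists m, delta < m /\ forall x, X x -> m <= p x) ->
  forall eps, 0 < eps ->
    exists (N : nat) (mu sigma : nat -> R),
      (1 <= N)%nat /\
      (forall i, (i < N)%nat -> 0 < sigma i) /\
      exists kl,
        IntegralOn X (fun x => p x * ln (p x / fN N mu sigma x)) kl /\
        kl < eps.
Proof.
  intros HXc Hpc Hp0 [a0 [b0 [HXab Hp]]] [delta [Hdel [m [Hdm Hm]]]] eps Heps.
  assert (Hm0 : 0 < m) by lra.
  assert (HpC : forall e, 0 < e -> exists d, 0 < d /\ forall phi, Cut X d phi ->
       exists pr : Riemann_integrable (fun x => phi x * p x) a0 b0, Rabs (RiemannInt pr - 1) < e).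
  { intros e He. destruct (Hp e He) as [d [Hd H]]. exists d. split; auto.
    intros phi [C1 [C2 [C3 C4]]]. apply H; auto. }
  assert (Hne : exists x0, X x0).
  { destruct (Classical_Prop.classic (exists x0, X x0)) as [E|E]; auto. exfalso.
    destruct (HpC (1/2) ltac:(lra)) as [d [Hd H]].
    assert (Cut X d (fun _ => 0)).
    { split; [|split; [|split]].
      - intros x. apply continuity_pt_const. intros u v; auto.
      - intros; lra.
      - intros x Hx. exfalso. apply E. exists x; auto.
      - auto. }
    destruct (H _ H0) as [pr Hpr].
    destruct (Rle_dec a0 b0) as [H1|H1].
    - rewrite (RiemannInt_P18 pr (RiemannInt_P14 a0 b0 0) H1) in Hpr.
      + rewrite RiemannInt_P15 in Hpr. rewrite Rmult_0_l, Rminus_0_l, Rabs_Ropp, Rabs_R1 in Hpr. lra.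
      + intros. unfold fct_cte. ring.
    - rewrite (RiemannInt_P8 pr (RiemannInt_P1 pr)) in Hpr.
      rewrite (RiemannInt_P18 (RiemannInt_P1 pr) (RiemannInt_P14 b0 a0 0)) in Hpr.
      + rewrite RiemannInt_P15 in Hpr. rewrite Rmult_0_l, Ropp_0, Rminus_0_l, Rabs_Ropp, Rabs_R1 in Hpr. lra.
      + lra.
      + intros. unfold fct_cte. ring. }
  destruct Hne as [x0 Hx0].
  assert (Hab : a0 < b0) by (specialize (HXab x0 Hx0); lra).
  destruct (dist_exists X x0 Hx0) as [D [HD1 [HD2 HD3]]].
  pose proof (dist_lip X D HD1 HD2) as HL.
  destruct (Heine p (fun c => a0 <= c <= b0) (compact_P3 _ _) (fun x _ => Hpc x)
              (mkposreal (m / 2) ltac:(lra))) as [[rho Hrho] Hu].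
  simpl in Hu.
  set (r := Rmin rho 1).
  assert (Hr : 0 < r) by (unfold r; apply Rmin_glb_lt; lra).
  assert (Hpos : forall x, D x < r -> m / 2 < p x).
  { intros x Hx. destruct (HD2 x r Hx) as [y [Hy Hxy]].
    pose proof (HXab y Hy). pose proof (Rmin_l rho 1). pose proof (Rmin_r rho 1). fold r in H0, H1.
    assert (Rabs (x - y) < 1) by lra. assert (Rabs (x - y) < rho) by lra.
    apply Rabs_def2 in H2. 
    assert (Rabs (p x - p y) < m / 2) by (apply Hu; lra).
    apply Rabs_def2 in H4. specialize (Hm y Hy). lra. }
  set (theta := exp (- (eps / 2))).
  assert (Hth0 : 0 < theta) by apply exp_pos.
  assert (Hth1 : theta < 1).
  { unfold theta. rewrite <- exp_0. apply exp_increasing. lra. }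
  set (e0 := (1 - theta) / (1 + theta)).
  assert (He0 : 0 < e0) by (unfold e0; apply Rdiv_lt_0_compat; lra).
  destruct (HpC e0 He0) as [d0 [Hd0 Hp0']].
  set (d := Rmin (Rmin d0 r) 1).
  assert (Hd : 0 < d) by (unfold d; repeat apply Rmin_glb_lt; lra).
  assert (Hdd0 : d <= d0) by (unfold d; eapply Rle_trans; [apply Rmin_l| apply Rmin_l]).
  assert (Hdr : d <= r) by (unfold d; eapply Rle_trans; [apply Rmin_l| apply Rmin_r]).
  assert (Hd1 : d <= 1) by (unfold d; apply Rmin_r).
  destruct (psi_cut X D d Hd HD1 HD2 HD3) as [Cpsi Hpsi1].
  set (ps := psi D d) in *.
  destruct (Hp0' ps (Cut_mono X d0 d ps Hdd0 Cpsi)) as [pr Hpr].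
  apply Rabs_def2 in Hpr.
  assert (Hfar : forall x, x < a0 \/ b0 < x -> d <= D x).
  { intros x Hx. destruct (Rle_dec d (D x)) as [|n]; auto. exfalso.
    destruct (HD2 x d) as [y [Hy Hxy]]; [lra|]. pose proof (HXab y Hy).
    apply Rabs_def2 in Hxy. lra. }
  set (q := fun x => / (1 + e0) * (ps x * p x)).
  assert (Hqc : continuity q).
  { intros x. unfold q. apply continuity_pt_mult.
    - apply continuity_pt_const; intros u v; auto.
    - apply continuity_pt_mult; [apply Cpsi| apply Hpc]. }
  assert (Hq0 : forall x, 0 <= q x).
  { intros x. unfold q. apply Rmult_le_pos; [left; apply Rinv_0_lt_compat; lra|].
    destruct (Rlt_dec (D x) d) as [Hx|Hx].
    - destruct (proj1 (proj2 Cpsi) x). pose proof (Hpos x ltac:(lra)). nra.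
    - rewrite (Cut_zero X D d ps HD1 Cpsi x) by lra. lra. }
  assert (Hqout : forall x, x < a0 \/ b0 < x -> q x = 0).
  { intros x Hx. unfold q. rewrite (Cut_zero X D d ps HD1 Cpsi x) by (apply Hfar; auto). ring. }
  assert (Hqint : forall u v, u <= a0 -> b0 <= v -> RInt q u v <= 1).
  { intros u v Hu1 Hv1.
    rewrite <- (RInt_Chasles q u a0 v) by (apply exRInt_cont; auto).
    rewrite <- (RInt_Chasles q a0 b0 v) by (apply exRInt_cont; auto).
    rewrite (RInt_zero_out q u a0) by (auto; intros; apply Hqout; lra).
    rewrite (RInt_zero_out q b0 v) by (auto; intros; apply Hqout; lra).
    unfold plus; simpl.
    unfold q. rewrite (RInt_scal (V := R_CompleteNormedModule) (fun x => ps x * p x)).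
    2:{ apply exRInt_cont. intros x. apply continuity_pt_mult; [apply Cpsi| apply Hpc]. }
    rewrite (RInt_Reals _ _ _ pr). unfold scal; simpl; unfold mult; simpl.
    assert (/ (1 + e0) * RiemannInt pr <= / (1 + e0) * (1 + e0))
      by (apply Rmult_le_compat_l; [left; apply Rinv_0_lt_compat; lra| lra]).
    rewrite Rinv_l in H by lra. lra. }
  set (eta := m * (1 - theta) / 4).
  assert (Heta : 0 < eta) by (unfold eta; apply Rdiv_lt_0_compat; nra).
  destruct (core q a0 b0 eta Hab Heta Hqc Hq0 Hqout Hqint) as [N [s [mu [HN [Hs Hf]]]]].
  exists N, mu, (fun _ => s). split; [auto| split; [intros; auto|]].
  set (f := fun x => fN N mu (fun _ => s) x).
  set (M := eps / 2 + Rabs (ln (2 * m * s))).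
  destruct (limit_exists X D p (fun x => p x * ln (p x / fN N mu (fun _ => s) x)) a0 b0 (d / 2) M (eps / 2))
    as [v [Hv1 Hv2]]; auto; try lra.
  - unfold M. pose proof (Rabs_pos (ln (2 * m * s))). lra.
  - intros x Hx.
    assert (HpX : m / 2 < p x) by (apply Hpos; lra).
    assert (Hfp := fN_pos N mu s x HN Hs).
    assert (Hfl := fN_le N mu s x HN Hs).
    assert (Hfx := Hf x).
    assert (Hqx : q x = / (1 + e0) * p x).
    { unfold q. rewrite Hpsi1 by lra. ring. }
    assert (Einv : / (1 + e0) = (1 + theta) / 2) by (unfold e0; field; lra).
    rewrite Hqx, Einv in Hfx.
    assert (Hft : theta * p x <= fN N mu (fun _ => s) x).
    { unfold eta in Hfx. nra. }
    assert (Hup : ln (p x / fN N mu (fun _ => s) x) <= eps / 2).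
    { rewrite <- (ln_exp (eps / 2)). apply ln_le.
      - apply Rdiv_lt_0_compat; lra.
      - replace (exp (eps / 2)) with (/ theta) by (unfold theta; rewrite exp_Ropp; field; apply Rgt_not_eq; apply exp_pos).
        apply (Rmult_le_reg_r (fN N mu (fun _ => s) x)); auto.
        unfold Rdiv. rewrite Rmult_assoc, Rinv_l by lra.
        apply (Rmult_le_reg_l theta); auto.
        replace (theta * (/ theta * fN N mu (fun _ => s) x)) with (fN N mu (fun _ => s) x) by (field; lra).
        lra. }
    assert (Hlo : ln (2 * m * s) <= ln (p x / fN N mu (fun _ => s) x)).
    { apply ln_le. nra.
      apply (Rmult_le_reg_r (fN N mu (fun _ => s) x)); auto.
      replace (p x / fN N mu (fun _ => s) x * fN N mu (fun _ => s) x) with (p x) by (field; lra).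
      apply Rle_trans with (2 * m * s * / (4 * s)).
      - apply Rmult_le_compat_l; [nra| auto].
      - replace (2 * m * s * / (4 * s)) with (m / 2) by (field; lra). lra. }
    assert (Habs : Rabs (ln (p x / fN N mu (fun _ => s) x)) <= M).
    { unfold M. pose proof (Rle_abs (- ln (2 * m * s))). rewrite Rabs_Ropp in H.
      pose proof (Rabs_pos (ln (2 * m * s))). apply Rabs_le. split; lra. }
    split; [lra| split; [| split]].
    + apply continuity_pt_mult; [apply Hpc|].
      apply (continuity_pt_comp (fun y => p y / fN N mu (fun _ => s) y) ln).
      * apply continuity_pt_div; [apply Hpc| apply fN_cont; auto| lra].
      * apply derivable_continuous_pt. exists (/ (p x / fN N mu (fun _ => s) x)).
        apply derivable_pt_lim_ln. apply Rdiv_lt_0_compat; lra.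
    + rewrite Rabs_mult, Rabs_right by lra. rewrite Rmult_comm. apply Rmult_le_compat_r; lra.
    + rewrite Rmult_comm. apply Rmult_le_compat_r; lra.
  - exists v. split; auto. lra.
Qed.

End M9.
Import M9.


Theorem mainTheorem2 (X : R -> Prop) (p : R -> R) :
  compact X ->
  continuity p ->
  (forall x, X x -> 0 <= p x) ->
  IntegralOn X p 1 ->
  (exists delta, 0 < delta /\
     exists m, delta < m /\ forall x, X x -> m <= p x) ->
  forall eps, 0 < eps ->
    exists (N : nat) (mu sigma : nat -> R),
      (1 <= N)%nat /\
      (forall i, (i < N)%nat -> 0 < sigma i) /\
      exists kl,
        IntegralOn X (fun x => p x * ln (p x / fN N mu sigma x)) kl /\
        kl < eps.
Proof.
  exact (M9.main_aux X p).
Qed.
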